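(* Let $G$ be a $3$-edge-connected graph and let $(o,f)$ be an all-positive nowhere-zero $k$-flow on $G$ for some integer $k$. Then every edge $e$ with $f(e)=1$ and every strong $2$-edge of $(o,f)$ is deletable in the orientation $(G,o)$.
   Context: An orientation is strong if for every ordered pair of distinct vertices $u,v$ there is a directed $uv$-path. An edge $e$ is deletable in an orientation $(G,o)$ if the restriction of $o$ to $E(G)\setminus\{e\}$ is a strong orientation of $G-e$. An all-positive nowhere-zero $k$-flow on $G$ is a pair $(o,f)$ of an orientation $o$ of $G$ and a map $f:E(G)\to\{1,2,\dots,k-1\}$ such that at every vertex the sum of $f$ over incoming edges equals the sum of $f$ over outgoing edges. An edge $e$ with $f(e)=2$ is a strong $2$-edge of $(o,f)$ if $G$ has no $3$-edge-cut containing $e$ in which the other two edges both have $f$-value $1$. *)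

(* Defs.v *)
(* Finite multigraphs (parallel edges and loops allowed). *)
From mathcomp Require Import all_boot.
Set Implicit Arguments. Unset Strict Implicit. Unset Printing Implicit Defensive.

Section Graphs.
Variables (V E : finType) (ends : E -> V * V).

Definition uadj (S : {set E}) : rel V :=
  fun u v => [exists e in S, ((ends e).1 == u) && ((ends e).2 == v)
                           || ((ends e).2 == u) && ((ends e).1 == v)].

Definition connected_on (S : {set E}) : Prop :=
  forall u v : V, connect (uadj S) u v.

Definition three_edge_connected : Prop :=
  forall F : {set E}, #|F| < 3 -> connected_on (~: F).

(* orientation o : E -> bool; o e = true means e is directed from (ends e).1
   to (ends e).2, otherwise from (ends e).2 to (ends e).1 *)
Definition tail (o : E -> bool) (e : E) : V := if o e then (ends e).1 else (ends e).2.
Definition head (o : E -> bool) (e : E) : V := if o e then (ends e).2 else (ends e).1.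

Definition darc (o : E -> bool) (S : {set E}) : rel V :=
  fun u v => [exists e in S, (tail o e == u) && (head o e == v)].

Definition strong_on (o : E -> bool) (S : {set E}) : Prop :=
  forall u v : V, u != v -> connect (darc o S) u v.

Definition deletable (o : E -> bool) (e : E) : Prop :=
  strong_on o (setT :\ e).

Definition apnz_flow (k : nat) (o : E -> bool) (f : E -> nat) : Prop :=
  (forall e, 1 <= f e <= k - 1) /\
  (forall v : V, \sum_(e | head o e == v) f e = \sum_(e | tail o e == v) f e).

Definition ecut (X : {set V}) : {set E} :=
  [set e | ((ends e).1 \in X) != ((ends e).2 \in X)].

Definition strong_2edge (f : E -> nat) (e : E) : Prop :=
  f e = 2 /\
  ~ (exists X : {set V}, [/\ #|ecut X| = 3, e \in ecut X &
        forall e', e' \in ecut X -> e' != e -> f e' = 1]).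

End Graphs.

(* Main.v *)
Require Import Defs.
From mathcomp Require Import all_boot zify.
Set Implicit Arguments. Unset Strict Implicit. Unset Printing Implicit Defensive.

Section Aux.
Variables (V E : finType) (ends : E -> V * V).

Lemma cut_sep (F : {set E}) (X : {set V}) (u v : V) :
  connected_on ends (~: F) -> ecut ends X \subset F -> u \in X -> v \notin X -> False.
Proof.
move=> Hc Hsub uX vX.
have cl : closed (uadj ends (~: F)) (mem X).
  move=> x y /existsP[e' /andP[]]; rewrite inE => e'F Hxy.
  have : e' \notin ecut ends X by apply: contra e'F => /(subsetP Hsub).
  rewrite inE negbK => /eqP Heq.
  by case/orP: Hxy => /andP[/eqP <- /eqP <-].
by have := closed_connect cl (Hc u v); rewrite uX (negbTE vX).
Qed.

Lemma cut_th (o : E -> bool) (X : {set V}) x :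
  (x \in ecut ends X) = ((Defs.tail ends o x \in X) != (Defs.head ends o x \in X)).
Proof. rewrite inE /Defs.tail /Defs.head; case: (o x) => //; by rewrite eq_sym. Qed.

End Aux.

Theorem lemma1 (V E : finType) (ends : E -> V * V) (k : nat)
    (o : E -> bool) (f : E -> nat) :
  three_edge_connected ends ->
  apnz_flow ends k o f ->
  forall e : E, (f e = 1 \/ strong_2edge ends f e) -> deletable ends o e.
Proof.
move=> H3 [Hf Hcons] e He u v uv.
apply/idPn => Nuv.
set D := darc ends o (setT :\ e).
set X := [set y | connect D u y].
have uX : u \in X by rewrite inE connect0.
have vX : v \notin X by rewrite inE.
have noout : forall x, Defs.tail ends o x \in X -> Defs.head ends o x \notin X -> x = e.
  move=> x tX hX; apply/eqP/negPn/negP => xe.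
  rewrite inE in hX; apply: (negP hX).
  move: tX; rewrite inE => tX; apply: (connect_trans tX); apply: connect1.
  by apply/existsP; exists x; rewrite !inE xe /= !eqxx.
clearbody X.
set hd := Defs.head ends o. set tl := Defs.tail ends o.
have Hsum : \sum_(x | hd x \in X) f x = \sum_(x | tl x \in X) f x.
  rewrite (partition_big hd (mem X)) //= (partition_big tl (mem X)) //=.
  apply: eq_bigr => y yX.
  rewrite (eq_bigl (fun x => hd x == y)); last first.
    by move=> x; case: (hd x =P y) => [->|]; rewrite ?yX ?andbF.
  rewrite [RHS](eq_bigl (fun x => tl x == y)); last first.
    by move=> x; case: (tl x =P y) => [->|]; rewrite ?yX ?andbF.
  exact: Hcons.
rewrite (bigID (fun x => tl x \in X)) [in RHS](bigID (fun x => hd x \in X)) /= in Hsum.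
rewrite (eq_bigl (fun x => (tl x \in X) && (hd x \in X)) _ (fun x => andbC _ _)) in Hsum.
move/addnI: Hsum => Hio.
set I := [set x | (hd x \in X) && (tl x \notin X)].
have HI : \sum_(x in I) f x = \sum_(x | (hd x \in X) && (tl x \notin X)) f x.
  by apply: eq_bigl => x; rewrite inE.
rewrite -HI in Hio.
have cardI : #|I| <= \sum_(x in I) f x.
  rewrite -sum1_card; apply: leq_sum => x _; by case/andP: (Hf x).
have cutsub : ecut ends X \subset e |: I.
  apply/subsetP => x; rewrite (cut_th _ o) -/hd -/tl !inE.
  case tX: (tl x \in X); case hX: (hd x \in X) => /= _ //.
  - by rewrite (noout x tX) ?hX ?eqxx.
  - by rewrite orbT.
have c3 : forall F : {set E}, #|F| < 3 -> ecut ends X \subset F -> False.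
  move=> F cF sF; exact: (cut_sep (H3 F cF) sF uX vX).
have cutle : #|ecut ends X| <= #|I|.+1.
  by apply: (leq_trans (subset_leq_card cutsub)); rewrite cardsU1; case: (_ \notin _).
case b: ((tl e \in X) && (hd e \notin X)); last first.
  rewrite [RHS]big_pred0 in Hio; last first.
    move=> x /=; case tX: (tl x \in X); case hX: (hd x \in X) => //=.
    have ex := noout x tX (negbT hX); subst x; by rewrite tX hX in b.
  apply: (c3 _ _ (subxx _)); apply: (leq_ltn_trans cutle).
  move: cardI; rewrite Hio; lia.
have Hio' := Hio.
rewrite [RHS](big_pred1 e) in Hio; last first.
  move=> x /=; apply/idP/idP => [/andP[tX hX]|/eqP ->]; last by rewrite b.
  by rewrite (noout x tX hX).
case: (leqP #|I| 1) => [I1|I2].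
  by apply: (c3 _ _ (subxx _)); apply: (leq_ltn_trans cutle).
have fe2 : f e = 2.
  case: He => [fe1|[]//]; move: cardI; rewrite Hio; lia.
have I2' : #|I| = 2.
  move: cardI; rewrite Hio fe2; lia.
case: He => [|[_ []]]; first by rewrite fe2.
have Eq : ecut ends X = e |: I.
  apply/eqP; rewrite eqEsubset cutsub /=; apply/subsetP => x.
  rewrite in_setU1 => /orP[/eqP->|].
    by rewrite (cut_th _ o); case/andP: b => -> /negbTE ->.
  by rewrite inE => /andP[hX tX]; rewrite (cut_th _ o) -/hd -/tl hX (negbTE tX).
have eI : e \notin I by rewrite inE; case/andP: b => -> _; rewrite andbF.
have H0 : \sum_(x in I) (f x - 1) = 0.
  have : \sum_(x in I) f x = \sum_(x in I) 1 + \sum_(x in I) (f x - 1).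
    rewrite -big_split; apply: eq_bigr => x _.
    have := Hf x. rewrite /=. lia.
  rewrite sum1_card I2' Hio fe2; lia.
move/eqP: H0; rewrite sum_nat_eq0 => /forallP H.
exists X; split.
- by rewrite Eq cardsU1 eI I2'.
- by rewrite Eq setU11.
- move=> e'; rewrite Eq in_setU1 => /orP[/eqP->|e'I]; first by rewrite eqxx.
  move=> _; move: (H e'); rewrite e'I /= => /eqP; move: (Hf e') => /andP[h _]; lia.
Qed.
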